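(* Let $S\le T_n$ be a transformation monoid and $G$ the normalizer of $S$ in $S_n$. If $a\in S$ is $\mathcal H$-related in $SG$ to an idempotent $e$ of $SG$, then $e\in S$ and $a$ is $\mathcal H$-related in $S$ to $e$.
   Context: A transformation monoid is a subsemigroup of $T_n$ containing the identity map; $G=\{g\in S_n:g^{-1}Sg=S\}$ and $SG=\{sg:s\in S,g\in G\}$, a semigroup. In a semigroup $U$ (with $U^1$ denoting $U$ with an identity adjoined), $a\,\mathcal R\,b$ if $a=bu$, $b=av$ for some $u,v\in U^1$; $a\,\mathcal L\,b$ if $a=ub$, $b=va$ for some $u,v\in U^1$; and $a\,\mathcal H\,b$ if both $a\,\mathcal R\,b$ and $a\,\mathcal L\,b$. *)

(* Defs.v *)
From HB Require Import structures.
From mathcomp Require Import all_boot all_fingroup.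
Set Implicit Arguments. Unset Strict Implicit. Unset Printing Implicit Defensive.

Notation trans n := {ffun 'I_n -> 'I_n}.

(* Product in T_n, composing left to right (maps act on the right):
   x (f g) = (x f) g. *)
Definition tmul n (f g : trans n) : trans n := [ffun x => g (f x)].

Definition tid n : trans n := [ffun x => x].

Definition is_tmonoid n (S : {set trans n}) : Prop :=
  tid n \in S /\ (forall a b, a \in S -> b \in S -> tmul a b \in S).

Definition pfun n (g : {perm 'I_n}) : trans n := [ffun x => g x].

Definition normalizerT n (S : {set trans n}) : {set {perm 'I_n}} :=
  [set g | [set tmul (tmul (pfun g^-1) s) (pfun g) | s in S] == S].

Definition prodSG n (S : {set trans n}) : {set trans n} :=
  [set tmul s (pfun g) | s in S, g in normalizerT S].

(* Green's relations in the semigroup U (with U^1 = U plus an adjoined identity). *)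
Definition Rrel n (U : {set trans n}) (a b : trans n) : Prop :=
  (a = b \/ exists2 u, u \in U & a = tmul b u) /\
  (b = a \/ exists2 v, v \in U & b = tmul a v).

Definition Lrel n (U : {set trans n}) (a b : trans n) : Prop :=
  (a = b \/ exists2 u, u \in U & a = tmul u b) /\
  (b = a \/ exists2 v, v \in U & b = tmul v a).

Definition Hrel n (U : {set trans n}) (a b : trans n) : Prop :=
  Rrel U a b /\ Lrel U a b.

(* Main.v *)
Require Import Defs.
From mathcomp Require Import all_boot all_fingroup.

Lemma tmulA n (f g h : trans n) : tmul (tmul f g) h = tmul f (tmul g h).
Proof. by apply/ffunP => x; rewrite !ffunE. Qed.

Lemma pig (T : finType) (f : nat -> T) : exists i j, i < j /\ f i = f j.
Proof.
have : ~~ injectiveb (fun i : 'I_#|T|.+1 => f i).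
  apply/injectiveP => inj; have := @leq_card _ _ _ inj.
  by rewrite card_ord ltnn.
move/injectivePn => [i [j ij Hij]].
case: (ltngtP i j) => h.
- by exists i, j.
- by exists j, i.
- by move: ij; rewrite -val_eqE /= h eqxx.
Qed.

Theorem lemma4p4 (n : nat) (S : {set trans n}) (a e : trans n) :
  is_tmonoid S ->
  a \in S ->
  e \in prodSG S -> tmul e e = e ->
  Hrel (prodSG S) a e ->
  e \in S /\ Hrel S a e.
Proof.
move=> [_ SM] aS _ ee [[R1 R2] [L1 L2]].
have ea : tmul e a = a.
  case: R1 => [->|[u _ ->]] //; by rewrite -tmulA ee.
have ae : tmul a e = a.
  case: L1 => [->|[u _ ->]] //; by rewrite tmulA ee.
have [v av] : exists v, tmul a v = e.
  case: R2 => [<-|[v _ ->]]; [by exists e | by exists v].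
pose r := fix r k := if k is k'.+1 then tmul (r k') a else e.
have rS : forall k, r k.+1 \in S.
  elim=> [|k IH] /=; first by rewrite ea.
  exact: SM.
have re : forall k, tmul (r k) e = r k.
  by case=> [|k] //=; rewrite tmulA ae.
have canc : forall k j, r k.+1 = r j.+1 -> r k = r j.
  move=> k j /= H; by rewrite -re -[r j]re -av -!tmulA H.
have ar : forall k, r k.+1 = tmul a (r k).
  elim=> [|k IH]; first by rewrite /= ea ae.
  have -> : r k.+2 = tmul (r k.+1) a by [].
  by rewrite {1}IH tmulA.
have shift : forall i d, r (i + d) = r i -> r d = r 0.
  elim=> [|i IH] d //= H; apply: IH; exact: canc.
have r0 : r 0 = e by [].
have r1 : r 1 = a by rewrite /= ea.
have rsucc : forall k, r k.+1 = tmul (r k) a by [].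
clearbody r.
have [d [d0 rd]] : exists d, 0 < d /\ r d = e.
  have [i [j [lt Hij]]] := pig _ r.
  exists (j - i); split; first by rewrite subn_gt0.
  have E : i + (j - i) = j by rewrite subnKC // ltnW.
  by rewrite -r0; apply: (shift i); rewrite E Hij.
case: d d0 rd => // k _ rk.
split; first by rewrite -rk; exact: rS.
case: k rk => [|k] rk.
  have eaE : e = a by rewrite -rk r1.
  by rewrite -eaE; split; split; left.
split; split.
- by right; exists a; rewrite ?ea.
- by right; exists (r k.+1); rewrite -?ar.
- by right; exists a; rewrite ?ae.
- by right; exists (r k.+1); rewrite -?rsucc.
Qed.
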